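(* Let $X$ be a locally compact Polish space with compatible metric $d$. Suppose there are a closed discrete sequence $(x_n)_{n\in\mathbb N}$ of distinct points of $X$ and pairwise disjoint open sets $U_n\ni x_n$ such that each $U_n$ is a topological manifold of positive dimension. Then $(X,d)$ is flexible. In particular, every noncompact, second-countable topological manifold of positive dimension, with any compatible metric, is flexible.
   Context: For closed $Y\subseteq X$, $\partial_X Y=Y\cap\overline{X\setminus Y}$ and $\mathrm{Homeo}_{\partial}(Y)$ is the group of homeomorphisms of $Y$ fixing each point of $\partial_X Y$; such $\phi$ extends to a homeomorphism $\tilde\phi$ of $X$ equal to the identity off $Y$, and its radius is $r(\phi)=\sup_{x\in X}d(x,\tilde\phi(x))$. A locally compact noncompact Polish space $X$ with compatible metric $d$ is flexible if there are pairwise disjoint sets $Y_n\subseteq X$ and $\phi_{n,m}\in\mathrm{Homeo}_\partial(Y_n)$ ($n,m\in\mathbb N$) such that: (1) each $Y_n$ is compact and no compact subset of $X$ meets infinitely many $Y_n$; (2) for each $n$, $(r(\phi_{n,m}))_m$ is decreasing and tends to $0$, and $r(\phi_{n,m})\ne0$ for all $n,m$. *)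

(* Defs.v *)
From Stdlib Require Import Reals Lra Classical List.
From Stdlib Require Fin.
Open Scope R_scope.

Definition is_metric {X : Type} (d : X -> X -> R) : Prop :=
  (forall x y, 0 <= d x y) /\ (forall x y, d x y = 0 <-> x = y) /\
  (forall x y, d x y = d y x) /\ (forall x y z, d x z <= d x y + d y z).

Definition is_open {X : Type} (d : X -> X -> R) (U : X -> Prop) : Prop :=
  forall x, U x -> exists e, 0 < e /\ forall y, d x y < e -> U y.

Definition is_closed {X : Type} (d : X -> X -> R) (F : X -> Prop) : Prop :=
  is_open d (fun x => ~ F x).

Definition closure {X : Type} (d : X -> X -> R) (A : X -> Prop) : X -> Prop :=
  fun x => forall e, 0 < e -> exists y, A y /\ d x y < e.

Definition is_compact {X : Type} (d : X -> X -> R) (K : X -> Prop) : Prop :=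
  forall (I : Type) (U : I -> X -> Prop),
    (forall i, is_open d (U i)) -> (forall x, K x -> exists i, U i x) ->
    exists l : list I, forall x, K x -> exists i, In i l /\ U i x.

Definition locally_compact {X : Type} (d : X -> X -> R) : Prop :=
  forall x, exists (V K : X -> Prop),
    is_open d V /\ V x /\ is_compact d K /\ (forall y, V y -> K y).

Definition separable {X : Type} (d : X -> X -> R) : Prop :=
  exists (D : X -> Prop) (g : X -> nat),
    (forall x y, D x -> D y -> g x = g y -> x = y) /\
    (forall x e, 0 < e -> exists y, D y /\ d x y < e).

Definition same_topology {X : Type} (d d' : X -> X -> R) : Prop :=
  forall U : X -> Prop, is_open d U <-> is_open d' U.

Definition complete {X : Type} (d : X -> X -> R) : Prop :=
  forall u : nat -> X,
    (forall e, 0 < e -> exists N, forall p q, (N <= p)%nat -> (N <= q)%nat -> d (u p) (u q) < e) ->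
    exists l, forall e, 0 < e -> exists N, forall p, (N <= p)%nat -> d (u p) l < e.

Definition polish {X : Type} (d : X -> X -> R) : Prop :=
  separable d /\ exists d' : X -> X -> R, is_metric d' /\ same_topology d d' /\ complete d'.

Definition second_countable {X : Type} (d : X -> X -> R) : Prop :=
  exists B : nat -> X -> Prop, (forall n, is_open d (B n)) /\
    forall U, is_open d U -> forall x, U x -> exists n, B n x /\ forall y, B n y -> U y.

(* Euclidean space R^m as Fin.t m -> R, with the (sup-norm, equivalently Euclidean) topology *)
Definition Eucl (m : nat) : Type := Fin.t m -> R.

Definition open_E (m : nat) (W : Eucl m -> Prop) : Prop :=
  forall v, W v -> exists e, 0 < e /\ forall w, (forall i, Rabs (w i - v i) < e) -> W w.

Definition cont_to_E {X : Type} (d : X -> X -> R) (m : nat) (A : X -> Prop) (f : X -> Eucl m) : Prop :=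
  forall x, A x -> forall e, 0 < e -> exists dl, 0 < dl /\
    forall y, A y -> d x y < dl -> forall i, Rabs (f y i - f x i) < e.

Definition cont_from_E {X : Type} (d : X -> X -> R) (m : nat) (W : Eucl m -> Prop) (g : Eucl m -> X) : Prop :=
  forall v, W v -> forall e, 0 < e -> exists dl, 0 < dl /\
    forall w, W w -> (forall i, Rabs (w i - v i) < dl) -> d (g v) (g w) < e.

Definition locally_euclidean {X : Type} (d : X -> X -> R) (A : X -> Prop) (m : nat) : Prop :=
  forall x, A x -> exists (V : X -> Prop) (W : Eucl m -> Prop) (phi : X -> Eucl m) (psi : Eucl m -> X),
    is_open d V /\ V x /\ (forall y, V y -> A y) /\ open_E m W /\
    (forall y, V y -> W (phi y)) /\ (forall w, W w -> V (psi w)) /\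
    (forall y, V y -> psi (phi y) = y) /\ (forall w, W w -> phi (psi w) = w) /\
    cont_to_E d m V phi /\ cont_from_E d m W psi.

(* A (a subspace of a metric space, hence Hausdorff) is a topological manifold
   of positive dimension *)
Definition manifold_pos {X : Type} (d : X -> X -> R) (A : X -> Prop) : Prop :=
  exists m, (1 <= m)%nat /\ locally_euclidean d A m.

Definition closed_discrete_seq {X : Type} (d : X -> X -> R) (x : nat -> X) : Prop :=
  (forall n k, x n = x k -> n = k) /\
  is_closed d (fun y => exists n, x n = y) /\
  (forall n, exists e, 0 < e /\ forall k, d (x n) (x k) < e -> k = n).

Definition rel_boundary {X : Type} (d : X -> X -> R) (Y : X -> Prop) : X -> Prop :=
  fun x => Y x /\ closure d (fun z => ~ Y z) x.

Definition cont_on {X : Type} (d : X -> X -> R) (A : X -> Prop) (f : X -> X) : Prop :=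
  forall x, A x -> forall e, 0 < e -> exists dl, 0 < dl /\
    forall y, A y -> d x y < dl -> d (f x) (f y) < e.

(* f : X -> X is the extension (identity off Y) of an element of Homeo_∂(Y) *)
Definition homeo_bd {X : Type} (d : X -> X -> R) (Y : X -> Prop) (f : X -> X) : Prop :=
  (forall x, ~ Y x -> f x = x) /\
  (forall y, Y y -> Y (f y)) /\
  (exists g : X -> X, (forall y, Y y -> Y (g y)) /\
     (forall y, Y y -> g (f y) = y) /\ (forall y, Y y -> f (g y) = y) /\
     cont_on d Y f /\ cont_on d Y g) /\
  (forall x, rel_boundary d Y x -> f x = x).

Definition radius {X : Type} (d : X -> X -> R) (f : X -> X) (r : R) : Prop :=
  is_lub (fun t => exists x, t = d x (f x)) r.

Definition flexible {X : Type} (d : X -> X -> R) : Prop :=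
  locally_compact d /\ ~ is_compact d (fun _ => True) /\ polish d /\
  exists (Y : nat -> X -> Prop) (phi : nat -> nat -> X -> X) (r : nat -> nat -> R),
    (forall n k, n <> k -> forall x, Y n x -> ~ Y k x) /\
    (forall n, is_compact d (Y n)) /\
    (forall K, is_compact d K -> exists N, forall n, (N <= n)%nat -> forall x, K x -> ~ Y n x) /\
    (forall n m, homeo_bd d (Y n) (phi n m)) /\
    (forall n m, radius d (phi n m) (r n m)) /\
    (forall n, Un_decreasing (r n) /\ Un_cv (r n) 0) /\
    (forall n m, r n m <> 0).

(* Main.v *)
Require Import Defs.
From Stdlib Require Import Reals Lra Classical ClassicalEpsilon FunctionalExtensionality List Lia.
From Stdlib Require Fin.
Open Scope R_scope.

Ltac splitall :=
  repeat match goal with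
  | |- context [Rle_dec ?a ?b] => destruct (Rle_dec a b)
  | H : context [Rle_dec ?a ?b] |- _ => destruct (Rle_dec a b)
  | |- context [Rcase_abs ?a] => destruct (Rcase_abs a)
  | H : context [Rcase_abs ?a] |- _ => destruct (Rcase_abs a)
  end.
Ltac mm := unfold Rmax, Rmin, Rabs in *; splitall; try lra.

Definition F2 (r x c : R) := x + /2 * Rmax 0 (r - Rabs (x - c)).
Definition G2 (r y c : R) := y - Rmax 0 (Rmin ((y - c + r)/3) (r - (y - c))).

Lemma G2F2 r x c : 0 <= r -> G2 r (F2 r x c) c = x.
Proof. intros. unfold G2, F2. mm. Qed.
Lemma F2G2 r y c : 0 <= r -> F2 r (G2 r y c) c = y.
Proof. intros. unfold G2, F2. mm. Qed.
Lemma F2_id r x c : r <= Rabs (x - c) -> F2 r x c = x.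
Proof. intros. unfold F2. mm. Qed.
Lemma G2_id r x c : r <= Rabs (x - c) -> G2 r x c = x.
Proof. intros. unfold G2. mm. Qed.
Lemma F2_box r x c a : 0 <= r <= a -> Rabs (x - c) <= a -> Rabs (F2 r x c - c) <= a.
Proof. intros. unfold F2. mm. Qed.
Lemma G2_box r x c a : 0 <= r <= a -> Rabs (x - c) <= a -> Rabs (G2 r x c - c) <= a.
Proof. intros. unfold G2. mm. Qed.
Lemma F2_lip r x c r' x' d : Rabs (r - r') <= d -> Rabs (x - x') <= d ->
  Rabs (F2 r x c - F2 r' x' c) <= 2 * d.
Proof. intros. unfold F2. mm. Qed.
Lemma G2_lip r x c r' x' d : Rabs (r - r') <= d -> Rabs (x - x') <= d ->
  Rabs (G2 r x c - G2 r' x' c) <= 3 * d.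
Proof. intros. unfold G2. mm. Qed.


Fixpoint fsum (n : nat) : (Fin.t n -> R) -> R :=
  match n return (Fin.t n -> R) -> R with
  | O => fun _ => 0
  | S k => fun f => f Fin.F1 + fsum k (fun j => f (Fin.FS j))
  end.

Lemma fsum_nonneg n f : (forall j, 0 <= f j) -> 0 <= fsum n f.
Proof.
  revert f; induction n; intros f H; simpl; [lra|].
  specialize (IHn (fun j => f (Fin.FS j))). pose proof (H Fin.F1).
  assert (0 <= fsum n (fun j => f (Fin.FS j))) by (apply IHn; auto). lra.
Qed.

Lemma fsum_zero n f : (forall j, f j = 0) -> fsum n f = 0.
Proof.
  revert f; induction n; intros f H; simpl; auto.
  rewrite H, IHn; auto. ring.
Qed.

Lemma fsum_ge n f i : (forall j, 0 <= f j) -> f i <= fsum n f.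
Proof.
  revert f; induction i; intros f H; simpl.
  - pose proof (fsum_nonneg n (fun j => f (Fin.FS j)) (fun j => H _)). lra.
  - pose proof (IHi (fun j => f (Fin.FS j)) (fun j => H _)). pose proof (H Fin.F1). lra.
Qed.

Lemma fsum_lip n f g d : 0 <= d -> (forall j, Rabs (f j - g j) <= d) ->
  Rabs (fsum n f - fsum n g) <= INR n * d.
Proof.
  revert f g; induction n; intros f g Hd H.
  - simpl. rewrite Rminus_0_r, Rabs_R0. lra.
  - rewrite S_INR. simpl fsum.
    specialize (IHn (fun j => f (Fin.FS j)) (fun j => g (Fin.FS j)) Hd (fun j => H _)).
    pose proof (H Fin.F1).
    replace (f Fin.F1 + fsum n (fun j => f (Fin.FS j)) - (g Fin.F1 + fsum n (fun j => g (Fin.FS j))))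
      with ((f Fin.F1 - g Fin.F1) + (fsum n (fun j => f (Fin.FS j)) - fsum n (fun j => g (Fin.FS j)))) by ring.
    eapply Rle_trans; [apply Rabs_triang|]. lra.
Qed.

Section H.
Variable m : nat.
Variable i0 : Fin.t m.
Variable c : Eucl m.
Variable a : R.

Definition rho (v : Eucl m) := fsum m (fun i => if Fin.eq_dec i i0 then 0 else Rabs (v i - c i)).
Definition rr (v : Eucl m) := Rmax 0 (a - rho v).
Definition hF (v : Eucl m) : Eucl m :=
  fun i => if Fin.eq_dec i i0 then F2 (rr v) (v i) (c i) else v i.
Definition hG (v : Eucl m) : Eucl m :=
  fun i => if Fin.eq_dec i i0 then G2 (rr v) (v i) (c i) else v i.

Lemma rho_hF v : rho (hF v) = rho v.
Proof. unfold rho, hF. f_equal. extensionality i. destruct (Fin.eq_dec i i0); auto. Qed.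
Lemma rho_hG v : rho (hG v) = rho v.
Proof. unfold rho, hG. f_equal. extensionality i. destruct (Fin.eq_dec i i0); auto. Qed.
Lemma rr_nonneg v : 0 <= rr v.
Proof. unfold rr. apply Rmax_l. Qed.

Lemma hGF v : hG (hF v) = v.
Proof.
  extensionality i. unfold hG. unfold rr at 1. rewrite rho_hF. fold (rr v).
  unfold hF. destruct (Fin.eq_dec i i0); auto. apply G2F2, rr_nonneg.
Qed.
Lemma hFG v : hF (hG v) = v.
Proof.
  extensionality i. unfold hF. unfold rr at 1. rewrite rho_hG. fold (rr v).
  unfold hG. destruct (Fin.eq_dec i i0); auto. apply F2G2, rr_nonneg.
Qed.

Definition inbox (b : R) (v : Eucl m) := forall i, Rabs (v i - c i) <= b.
Definition inobox (b : R) (v : Eucl m) := forall i, Rabs (v i - c i) < b.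

Lemma rr_small v j : j <> i0 -> a <= Rabs (v j - c j) -> rr v = 0.
Proof.
  intros Hj H. unfold rr.
  assert (a <= rho v).
  { unfold rho. eapply Rle_trans; [|apply fsum_ge with (i := j)].
    - destruct (Fin.eq_dec j i0); [contradiction|lra].
    - intros k. destruct (Fin.eq_dec k i0); [lra|apply Rabs_pos]. }
  mm.
Qed.

Lemma hF_supp v : hF v <> v -> inobox a v.
Proof.
  intros Hne j. destruct (Rlt_dec (Rabs (v j - c j)) a) as [h|h]; auto.
  exfalso; apply Hne. extensionality i. unfold hF.
  destruct (Fin.eq_dec i i0) as [e|e]; auto. subst i.
  apply F2_id. destruct (Fin.eq_dec j i0) as [e|e].
  - subst. unfold rr. assert (0 <= rho v) by (apply fsum_nonneg; intro k; destruct (Fin.eq_dec k i0); [lra|apply Rabs_pos]).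
    mm.
  - rewrite (rr_small v j e) by lra. apply Rabs_pos.
Qed.
Lemma hG_supp v : hG v <> v -> inobox a v.
Proof.
  intros Hne j. destruct (Rlt_dec (Rabs (v j - c j)) a) as [h|h]; auto.
  exfalso; apply Hne. extensionality i. unfold hG.
  destruct (Fin.eq_dec i i0) as [e|e]; auto. subst i.
  apply G2_id. destruct (Fin.eq_dec j i0) as [e|e].
  - subst. unfold rr. assert (0 <= rho v) by (apply fsum_nonneg; intro k; destruct (Fin.eq_dec k i0); [lra|apply Rabs_pos]).
    mm.
  - rewrite (rr_small v j e) by lra. apply Rabs_pos.
Qed.

Lemma rr_le v : 0 <= a -> rr v <= a.
Proof.
  intros. unfold rr. assert (0 <= rho v) by (apply fsum_nonneg; intro k; destruct (Fin.eq_dec k i0); [lra|apply Rabs_pos]).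
  mm.
Qed.

Lemma hF_box v : 0 <= a -> inbox a v -> inbox a (hF v).
Proof.
  intros Ha H i. unfold hF. destruct (Fin.eq_dec i i0); auto.
  apply F2_box; auto. split; [apply rr_nonneg|apply rr_le; auto].
Qed.
Lemma hG_box v : 0 <= a -> inbox a v -> inbox a (hG v).
Proof.
  intros Ha H i. unfold hG. destruct (Fin.eq_dec i i0); auto.
  apply G2_box; auto. split; [apply rr_nonneg|apply rr_le; auto].
Qed.

Lemma rr_lip v w d : 0 <= d -> (forall j, Rabs (v j - w j) <= d) -> Rabs (rr v - rr w) <= INR m * d.
Proof.
  intros Hd H.
  assert (Rabs (rho v - rho w) <= INR m * d).
  { apply fsum_lip; auto. intro j. destruct (Fin.eq_dec j i0).
    - rewrite Rminus_0_r, Rabs_R0; auto.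
    - specialize (H j). mm. }
  unfold rr. mm.
Qed.

Lemma hF_lip v w d : 0 <= d -> (forall j, Rabs (v j - w j) <= d) ->
  forall i, Rabs (hF v i - hF w i) <= 2 * (INR m + 1) * d.
Proof.
  intros Hd H i. pose proof (pos_INR m).
  pose proof (rr_lip v w d Hd H). unfold hF. destruct (Fin.eq_dec i i0).
  - eapply Rle_trans; [apply F2_lip with (d := (INR m + 1) * d)|]; try nra.
    specialize (H i); nra.
  - specialize (H i). nra.
Qed.
Lemma hG_lip v w d : 0 <= d -> (forall j, Rabs (v j - w j) <= d) ->
  forall i, Rabs (hG v i - hG w i) <= 3 * (INR m + 1) * d.
Proof.
  intros Hd H i. pose proof (pos_INR m).
  pose proof (rr_lip v w d Hd H). unfold hG. destruct (Fin.eq_dec i i0).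
  - eapply Rle_trans; [apply G2_lip with (d := (INR m + 1) * d)|]; try nra.
    specialize (H i); nra.
  - specialize (H i). nra.
Qed.

Lemma hF_center : 0 < a -> hF c <> c.
Proof.
  intros Ha E. assert (Hr : rr c = a).
  { unfold rr, rho. rewrite fsum_zero.
    - unfold Rmax; destruct (Rle_dec 0 (a - 0)); lra.
    - intro j. destruct (Fin.eq_dec j i0); auto. rewrite Rminus_diag, Rabs_R0; auto. }
  assert (E2 : hF c i0 = c i0) by (rewrite E; auto).
  unfold hF in E2. destruct (Fin.eq_dec i0 i0) as [_|n]; [|apply n; auto].
  unfold F2 in E2. rewrite Hr, Rminus_diag, Rabs_R0 in E2. mm.
Qed.
End H.


Fixpoint allfin (n : nat) : list (Fin.t n) :=
  match n with O => nil | S k => Fin.F1 :: map Fin.FS (allfin k) end.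
Lemma allfin_in n (i : Fin.t n) : In i (allfin n).
Proof. induction i; simpl; auto. right. apply in_map; auto. Qed.

Section HB.
Variable m : nat.
Variable I : Type.
Variable Oc : I -> Eucl m -> Prop.

Definition box (lo hi : Eucl m) (v : Eucl m) := forall i, lo i <= v i <= hi i.
Definition fc (S : Eucl m -> Prop) := exists l : list I, forall v, S v -> exists i, In i l /\ Oc i v.

Lemma nofc_nonempty lo hi : ~ fc (box lo hi) -> forall i, lo i <= hi i.
Proof.
  intros H i. destruct (Rle_dec (lo i) (hi i)); auto. exfalso. apply H.
  exists nil. intros v Hv. specialize (Hv i). lra.
Qed.

Definition sub (lo hi lo' hi' : Eucl m) := forall i, lo i <= lo' i /\ hi' i <= hi i.

Lemma split1 lo hi j : ~ fc (box lo hi) -> exists lo' hi', ~ fc (box lo' hi') /\ sub lo hi lo' hi' /\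
   hi' j - lo' j <= (hi j - lo j) / 2.
Proof.
  intros H. pose proof (nofc_nonempty _ _ H) as Hne.
  set (mid := (lo j + hi j) / 2).
  set (hi1 := fun i => if Fin.eq_dec i j then mid else hi i).
  set (lo2 := fun i => if Fin.eq_dec i j then mid else lo i).
  destruct (classic (fc (box lo hi1))) as [[l1 H1]|H1].
  - destruct (classic (fc (box lo2 hi))) as [[l2 H2]|H2].
    + exfalso. apply H. exists (l1 ++ l2). intros v Hv.
      destruct (Rle_dec (v j) mid).
      * destruct (H1 v) as [i [Hi Oi]].
        { intro k. unfold hi1. destruct (Fin.eq_dec k j); [subst; split; [apply Hv|auto]|apply Hv]. }
        exists i; split; auto. apply in_or_app; auto.
      * destruct (H2 v) as [i [Hi Oi]].
        { intro k. unfold lo2. destruct (Fin.eq_dec k j); [subst; split; [lra|apply Hv]|apply Hv]. }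
        exists i; split; auto. apply in_or_app; auto.
    + exists lo2, hi. split; auto. split.
      * intro i. unfold lo2. specialize (Hne i). destruct (Fin.eq_dec i j); [subst; unfold mid; lra|lra].
      * unfold lo2. destruct (Fin.eq_dec j j) as [_|n]; [|now destruct n]. unfold mid; lra.
  - exists lo, hi1. split; auto. split.
    + intro i. unfold hi1. specialize (Hne i). destruct (Fin.eq_dec i j); [subst; unfold mid; lra|lra].
    + unfold hi1. destruct (Fin.eq_dec j j) as [_|n]; [|now destruct n]. unfold mid; lra.
Qed.

Lemma splitL L : forall lo hi, ~ fc (box lo hi) -> exists lo' hi', ~ fc (box lo' hi') /\ sub lo hi lo' hi' /\
   forall j, In j L -> hi' j - lo' j <= (hi j - lo j) / 2.
Proof.
  induction L as [|j L IH]; intros lo hi H.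
  - exists lo, hi. split; auto. split; [intro; lra|]. intros j [].
  - destruct (split1 lo hi j H) as [lo1 [hi1 [H1 [S1 W1]]]].
    destruct (IH lo1 hi1 H1) as [lo2 [hi2 [H2 [S2 W2]]]].
    exists lo2, hi2. split; auto. split.
    + intro i. specialize (S1 i); specialize (S2 i); lra.
    + intros k [Hjk|Hk].
      * subst k. specialize (S2 j). lra.
      * specialize (W2 k Hk). specialize (S1 k). lra.
Qed.

Lemma step_ex (p : Eucl m * Eucl m) : ~ fc (box (fst p) (snd p)) ->
  exists q : Eucl m * Eucl m, ~ fc (box (fst q) (snd q)) /\ sub (fst p) (snd p) (fst q) (snd q) /\
   forall j, snd q j - fst q j <= (snd p j - fst p j) / 2.
Proof.
  intros H. destruct (splitL (allfin m) _ _ H) as [lo' [hi' [A1 [A2 A3]]]].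
  exists (lo', hi'). simpl. split; auto. split; auto. intro j. apply A3, allfin_in.
Qed.

Definition stepf (p : Eucl m * Eucl m) : Eucl m * Eucl m :=
  match excluded_middle_informative (~ fc (box (fst p) (snd p))) with
  | left H => proj1_sig (constructive_indefinite_description _ (step_ex p H))
  | right _ => p
  end.

Fixpoint bseq (p : Eucl m * Eucl m) (k : nat) : Eucl m * Eucl m :=
  match k with O => p | S k' => stepf (bseq p k') end.

Lemma stepf_prop p : ~ fc (box (fst p) (snd p)) ->
  ~ fc (box (fst (stepf p)) (snd (stepf p))) /\ sub (fst p) (snd p) (fst (stepf p)) (snd (stepf p)) /\
   forall j, snd (stepf p) j - fst (stepf p) j <= (snd p j - fst p j) / 2.
Proof.
  intros H. unfold stepf. destruct (excluded_middle_informative _) as [h|h]; [|contradiction].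
  destruct (constructive_indefinite_description _ _) as [q Q]. exact Q.
Qed.

Lemma bseq_prop p : ~ fc (box (fst p) (snd p)) -> forall k,
  ~ fc (box (fst (bseq p k)) (snd (bseq p k))) /\
  sub (fst (bseq p k)) (snd (bseq p k)) (fst (bseq p (S k))) (snd (bseq p (S k))) /\
  forall j, snd (bseq p (S k)) j - fst (bseq p (S k)) j <= (snd (bseq p k) j - fst (bseq p k) j) / 2.
Proof.
  intros H0. assert (Hn : forall k, ~ fc (box (fst (bseq p k)) (snd (bseq p k)))).
  { induction k; simpl; auto. apply stepf_prop; auto. }
  intro k. split; auto. simpl. apply stepf_prop; auto.
Qed.

Theorem heine_borel lo hi : (forall i, open_E m (Oc i)) -> (forall v, box lo hi v -> exists i, Oc i v) ->
  fc (box lo hi).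
Proof.
  intros Hop Hcov. apply NNPP. intro H0.
  set (p := (lo, hi)). change (~ fc (box (fst p) (snd p))) in H0.
  pose proof (bseq_prop p H0) as BP.
  set (L k := fst (bseq p k)). set (Hh k := snd (bseq p k)).
  assert (Hmono : forall k k', (k <= k')%nat -> sub (L k) (Hh k) (L k') (Hh k')).
  { intros k k' Hk. induction Hk.
    - intro i; lra.
    - intro i. destruct (BP m0) as [_ [S _]]. specialize (S i). specialize (IHHk i). fold (L m0) (Hh m0) in S.
      unfold L, Hh in *. lra. }
  assert (Hne : forall k i, L k i <= Hh k i).
  { intros k i. destruct (BP k) as [N _]. apply (nofc_nonempty _ _ N). }
  assert (Hlh : forall k k' i, L k i <= Hh k' i).
  { intros k k' i. destruct (Nat.le_ge_cases k k') as [h|h].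
    - pose proof (Hmono _ _ h i). pose proof (Hne k' i). lra.
    - pose proof (Hmono _ _ h i). pose proof (Hne k i). lra. }
  assert (Hz : forall i, exists z, is_lub (fun t => exists k, t = L k i) z).
  { intro i. destruct (completeness (fun t => exists k, t = L k i)) as [z Hz].
    - exists (Hh O i). intros t [k ->]. apply Hlh.
    - exists (L O i). eauto.
    - eauto. }
  set (z := fun i => proj1_sig (constructive_indefinite_description _ (Hz i))).
  assert (Hzb : forall k i, L k i <= z i <= Hh k i).
  { intros k i. unfold z. destruct (constructive_indefinite_description _ _) as [zi [U1 U2]]. simpl.
    split. - apply U1; eauto. - apply U2. intros t [k' ->]. apply Hlh. }
  assert (Hw : forall k i, Hh k i - L k i <= (hi i - lo i) * (/2) ^ k).
  { induction k; intro i.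
    - simpl. unfold Hh, L, p; simpl. lra.
    - destruct (BP k) as [_ [_ W]]. specialize (W i). specialize (IHk i). fold (L k) (Hh k) (L (S k)) (Hh (S k)) in W.
      simpl pow. lra. }
  destruct (Hcov z) as [i0 Oz].
  { intro i. specialize (Hzb O i). unfold L, Hh, p in Hzb. simpl in Hzb. auto. }
  destruct (Hop i0 z Oz) as [e [He Hball]].
  set (M := fsum m (fun i => Rabs (hi i - lo i)) + 1).
  assert (HM : forall i, hi i - lo i <= M).
  { intro i. unfold M. pose proof (fsum_ge m (fun i => Rabs (hi i - lo i)) i (fun j => Rabs_pos _)).
    simpl in H. pose proof (Rle_abs (hi i - lo i)). lra. }
  assert (HM0 : 0 < M).
  { unfold M. pose proof (fsum_nonneg m (fun i => Rabs (hi i - lo i)) (fun j => Rabs_pos _)). lra. }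
  destruct (pow_lt_1_zero (/2) ltac:(rewrite Rabs_pos_eq; lra) (e / M) ltac:(apply Rdiv_lt_0_compat; lra)) as [N HN].
  specialize (HN N (le_n N)). rewrite Rabs_pos_eq in HN by (apply pow_le; lra).
  destruct (BP N) as [HN0 _]. apply HN0. exists (i0 :: nil). intros v Hv. exists i0. split; [left; auto|].
  apply Hball. intro i. specialize (Hv i). specialize (Hzb N i). specialize (Hw N i). specialize (HM i).
  fold (L N) (Hh N) in Hv.
  assert (Hp : 0 <= (/2) ^ N) by (apply pow_le; lra).
  assert (hi i - lo i >= 0 \/ hi i - lo i < 0) by lra.
  assert ((hi i - lo i) * (/ 2) ^ N <= M * (/2)^N) by (apply Rmult_le_compat_r; lra).
  assert (M * (/2)^N < e).
  { apply Rmult_lt_compat_l with (r := M) in HN; auto. unfold Rdiv in HN. rewrite <- Rmult_assoc in HN.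
    rewrite (Rmult_comm M e), Rmult_assoc, Rinv_r, Rmult_1_r in HN; lra. }
  unfold Rabs; destruct (Rcase_abs _); lra.
Qed.
End HB.


Lemma eventually_list (A : Type) (P : A -> nat -> Prop) (l : list A) :
  (forall a, In a l -> exists N, forall n, (N <= n)%nat -> P a n) ->
  exists N, forall a, In a l -> forall n, (N <= n)%nat -> P a n.
Proof.
  induction l as [|a l IH]; intros H.
  - exists O. intros a [].
  - destruct (H a (or_introl eq_refl)) as [N1 H1].
    destruct IH as [N2 H2]. { intros b Hb. apply H; right; auto. }
    exists (max N1 N2). intros b [<-|Hb] n Hn.
    + apply H1. lia.
    + apply H2; auto. lia.
Qed.

Section Met.
Variable X : Type.
Variable d : X -> X -> R.
Hypothesis Hm : is_metric d.

Lemma d_nonneg x y : 0 <= d x y. Proof. apply Hm. Qed.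
Lemma d_sym x y : d x y = d y x. Proof. apply Hm. Qed.
Lemma d_tri x y z : d x z <= d x y + d y z. Proof. apply Hm. Qed.
Lemma d_refl x : d x x = 0. Proof. apply Hm; auto. Qed.
Lemma d_eq x y : d x y = 0 -> x = y. Proof. apply Hm. Qed.

Lemma open_ball z r : is_open d (fun y => d z y < r).
Proof.
  intros x Hx. exists (r - d z x). split; [lra|]. intros y Hy.
  pose proof (d_tri z x y). lra.
Qed.

Lemma closed_cball z r : is_closed d (fun y => d z y <= r).
Proof.
  intros x Hx. exists (d z x - r). split; [lra|]. intros y Hy Hy'.
  pose proof (d_tri z y x). rewrite (d_sym y x) in H. lra.
Qed.

Lemma compact_closed_sub K F : is_compact d K -> is_closed d F -> (forall y, F y -> K y) -> is_compact d F.
Proof.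
  intros HK HF HFK I U HU Hcov.
  set (U' := fun (o : option I) y => match o with Some i => U i y | None => ~ F y end).
  destruct (HK (option I) U') as [l Hl].
  - intros [i|]; simpl; [apply HU|exact HF].
  - intros y Hy. destruct (classic (F y)) as [h|h].
    + destruct (Hcov y h) as [i Hi]. exists (Some i); auto.
    + exists None; auto.
  - exists (flat_map (fun o => match o with Some i => i :: nil | None => nil end) l).
    intros y Hy. destruct (Hl y (HFK y Hy)) as [[i|] [Hin Hi]].
    + exists i. split; auto. apply in_flat_map. exists (Some i). simpl; auto.
    + simpl in Hi. contradiction.
Qed.

Lemma chart_compact m (W : Eucl m -> Prop) (psi : Eucl m -> X) lo hi :
  open_E m W -> cont_from_E d m W psi -> (forall w, box m lo hi w -> W w) ->
  is_compact d (fun y => exists w, box m lo hi w /\ y = psi w).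
Proof.
  intros HW Hpsi Hbox I U HU Hcov.
  set (O := fun i w => W w /\ U i (psi w)).
  destruct (heine_borel m I O lo hi) as [l Hl].
  - intros i w [Ww Uw]. destruct (HU i (psi w) Uw) as [e [He He']].
    destruct (Hpsi w Ww e He) as [dl [Hdl Hdl']].
    destruct (HW w Ww) as [e2 [He2 He2']].
    exists (Rmin dl e2). split; [apply Rmin_pos; auto|]. intros w' Hw'.
    assert (W w') by (apply He2'; intro i0; specialize (Hw' i0); pose proof (Rmin_r dl e2); lra).
    split; auto. apply He'. apply Hdl'; auto. intro i0; specialize (Hw' i0); pose proof (Rmin_l dl e2); lra.
  - intros v Hv. destruct (Hcov (psi v)) as [i Hi]; eauto. exists i. split; auto.
  - exists l. intros y [w [Hw ->]]. destruct (Hl w Hw) as [i [Hin [_ Hi]]]. eauto.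
Qed.

Lemma cauchy_compact (u : nat -> X) K N0 :
  (forall e, 0 < e -> exists N, forall p q, (N <= p)%nat -> (N <= q)%nat -> d (u p) (u q) < e) ->
  is_compact d K -> (forall p, (N0 <= p)%nat -> K (u p)) ->
  exists l, forall e, 0 < e -> exists N, forall p, (N <= p)%nat -> d (u p) l < e.
Proof.
  intros Hc HK HuK. apply NNPP. intro Hno.
  set (I := {z : X & {e : R | 0 < e /\ exists N, forall q, (N <= q)%nat -> e <= d (u q) z}}).
  set (U := fun (i : I) y => d (projT1 i) y < proj1_sig (projT2 i)).
  destruct (HK I U) as [l Hl].
  - intro i. apply open_ball.
  - intros z Hz.
    assert (exists e, 0 < e /\ forall N, exists p, (N <= p)%nat /\ e <= d (u p) z) as [e [He Hp]].
    { apply NNPP. intro H. apply Hno. exists z. intros e He. apply NNPP. intro H2. apply H.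
      exists e. split; auto. intro N. apply NNPP. intro H3. apply H2. exists N. intros p Hp.
      apply Rnot_le_lt. intro H4. apply H3. eauto. }
    destruct (Hc (e/2) ltac:(lra)) as [Nc HNc].
    destruct (Hp Nc) as [p [Hp1 Hp2]].
    assert (Hex : 0 < e / 2 /\ exists N, forall q, (N <= q)%nat -> e / 2 <= d (u q) z).
    { split; [lra|]. exists Nc. intros q Hq. specialize (HNc p q Hp1 Hq).
      pose proof (d_tri (u p) (u q) z). lra. }
    exists (existT _ z (exist _ (e/2) Hex)). unfold U. simpl.
    rewrite d_refl; lra.
  - destruct (eventually_list I (fun i q => proj1_sig (projT2 i) <= d (u q) (projT1 i)) l) as [N HN].
    { intros [z [e [He [N HN]]]] _. exists N. simpl. auto. }
    destruct (Hl (u (max N N0)) (HuK _ (Nat.le_max_r _ _))) as [i [Hin Hi]].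
    specialize (HN i Hin (max N N0) (Nat.le_max_l _ _)). unfold U in Hi.
    rewrite d_sym in Hi. lra.
Qed.
End Met.


Lemma inv_close a b t e : 0 < a -> Rabs (a - b) <= t -> t < a / 2 -> t < e * a * a / 4 -> Rabs (/a - /b) < e.
Proof.
  intros Ha H1 H2 H3.
  assert (Hb : a / 2 < b) by (unfold Rabs in H1; destruct (Rcase_abs (a - b)); lra).
  assert (Hb0 : 0 < b) by lra.
  assert (Hea : 0 < e * a * a) by (pose proof (Rabs_pos (a - b)); lra).
  assert (He : 0 < e) by (destruct (Rle_lt_dec e 0); auto; nra).
  replace (/a - /b) with ((b - a) * / (a * b)) by (field; lra).
  rewrite Rabs_mult, Rabs_inv, (Rabs_pos_eq (a * b)) by nra.
  rewrite Rabs_minus_sym.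
  apply Rmult_lt_reg_r with (r := a * b); [nra|].
  rewrite Rmult_assoc, Rinv_l by nra. rewrite Rmult_1_r.
  assert (e * a * a / 4 <= e * (a * b)) by nra. lra.
Qed.

Section Pol.
Variable X : Type.
Variable d : X -> X -> R.
Hypothesis Hm : is_metric d.
Hypothesis Hlc : locally_compact d.

Definition cball x t := fun y => d x y <= t.
Definition Sx x := fun t => 0 < t <= 1 /\ is_compact d (cball x t).

Lemma Sx_ne x : exists t, Sx x t.
Proof.
  destruct (Hlc x) as [V [K [HV [Vx [HK HVK]]]]].
  destruct (HV x Vx) as [e [He He']].
  exists (Rmin (e/2) 1). split.
  - split; [apply Rmin_pos; lra|apply Rmin_r].
  - apply (compact_closed_sub X d K); auto.
    + apply closed_cball; auto.
    + intros y Hy. apply HVK, He'. unfold cball in Hy. pose proof (Rmin_l (e/2) 1). lra.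
Qed.

Lemma ell_ex x : exists l, is_lub (Sx x) l.
Proof.
  destruct (completeness (Sx x)) as [l Hl].
  - exists 1. intros t [[_ h] _]; auto.
  - apply Sx_ne.
  - eauto.
Qed.

Definition ell x := proj1_sig (constructive_indefinite_description _ (ell_ex x)).
Lemma ell_lub x : is_lub (Sx x) (ell x).
Proof. unfold ell. destruct (constructive_indefinite_description _ _); auto. Qed.

Lemma ell_pos x : 0 < ell x.
Proof. destruct (Sx_ne x) as [t Ht]. pose proof (proj1 (ell_lub x) t Ht). destruct Ht; lra. Qed.

Lemma ell_compact x t : t < ell x -> is_compact d (cball x t).
Proof.
  intros Ht. destruct (classic (exists s, Sx x s /\ t < s)) as [[s [[_ Hs] Hts]]|H].
  - apply (compact_closed_sub X d (cball x s)); auto.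
    + apply closed_cball; auto.
    + unfold cball; intros y Hy; lra.
  - exfalso. assert (ell x <= t).
    { apply (proj2 (ell_lub x)). intros s Hs. apply Rnot_lt_le. intro. apply H; eauto. }
    lra.
Qed.

Lemma ell_lip x y : ell x <= ell y + d x y.
Proof.
  apply (proj2 (ell_lub x)). intros s [[Hs0 Hs1] Hs].
  pose proof (ell_pos y).
  destruct (Rle_dec s (d x y)); [lra|].
  assert (Sx y (s - d x y)).
  { split; [split; [lra|pose proof (d_nonneg X d Hm x y); lra]|].
    apply (compact_closed_sub X d (cball x s)); auto.
    - apply closed_cball; auto.
    - unfold cball; intros z Hz. pose proof (d_tri X d Hm x y z). lra. }
  pose proof (proj1 (ell_lub y) _ H0). lra.
Qed.

Lemma ell_abs x y : Rabs (ell x - ell y) <= d x y.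
Proof.
  pose proof (ell_lip x y). pose proof (ell_lip y x). rewrite (d_sym X d Hm y x) in H0.
  unfold Rabs; destruct (Rcase_abs _); lra.
Qed.

Lemma inv_ell_cont x e : 0 < e -> exists dl, 0 < dl /\ forall y, d x y < dl -> Rabs (/ell x - /ell y) < e.
Proof.
  intros He. pose proof (ell_pos x).
  exists (Rmin (ell x / 2) (e * ell x * ell x / 4)). split.
  - apply Rmin_pos; [lra|]. apply Rdiv_lt_0_compat; [|lra]. repeat apply Rmult_lt_0_compat; lra.
  - intros y Hy. apply inv_close with (t := d x y); auto.
    + apply ell_abs.
    + pose proof (Rmin_l (ell x / 2) (e * ell x * ell x / 4)). lra.
    + pose proof (Rmin_r (ell x / 2) (e * ell x * ell x / 4)). lra.
Qed.

Definition d2 x y := d x y + Rabs (/ell x - /ell y).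

Lemma d2_metric : is_metric d2.
Proof.
  unfold d2. split; [|split; [|split]].
  - intros x y. pose proof (d_nonneg X d Hm x y). pose proof (Rabs_pos (/ell x - /ell y)). lra.
  - intros x y. split.
    + intros H. pose proof (d_nonneg X d Hm x y). pose proof (Rabs_pos (/ell x - /ell y)).
      apply (d_eq X d Hm). lra.
    + intros ->. rewrite (d_refl X d Hm), Rminus_diag, Rabs_R0. lra.
  - intros x y. rewrite (d_sym X d Hm), Rabs_minus_sym. auto.
  - intros x y z. pose proof (d_tri X d Hm x y z).
    pose proof (Rabs_triang (/ell x - /ell y) (/ell y - /ell z)).
    replace (/ell x - /ell y + (/ell y - /ell z)) with (/ell x - /ell z) in H0 by ring. lra.
Qed.

Lemma d2_same : same_topology d d2.
Proof.
  intros U. split.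
  - intros HU x Ux. destruct (HU x Ux) as [e [He He']]. exists e. split; auto.
    intros y Hy. apply He'. unfold d2 in Hy. pose proof (Rabs_pos (/ell x - /ell y)). lra.
  - intros HU x Ux. destruct (HU x Ux) as [e [He He']].
    destruct (inv_ell_cont x (e/2)) as [dl [Hdl Hdl']]; [lra|].
    exists (Rmin dl (e/2)). split; [apply Rmin_pos; lra|].
    intros y Hy. apply He'. unfold d2. pose proof (Rmin_l dl (e/2)). pose proof (Rmin_r dl (e/2)).
    pose proof (Hdl' y ltac:(lra)). lra.
Qed.

Lemma d2_complete : complete d2.
Proof.
  intros u Hc.
  assert (Hcd : forall e, 0 < e -> exists N, forall p q, (N <= p)%nat -> (N <= q)%nat -> d (u p) (u q) < e).
  { intros e He. destruct (Hc e He) as [N HN]. exists N. intros p q Hp Hq. specialize (HN p q Hp Hq).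
    unfold d2 in HN. pose proof (Rabs_pos (/ell (u p) - /ell (u q))). lra. }
  destruct (Hc 1 ltac:(lra)) as [N1 HN1].
  set (M := /ell (u N1) + 1).
  assert (HM : 0 < M) by (unfold M; pose proof (ell_pos (u N1)); pose proof (Rinv_0_lt_compat _ H); lra).
  assert (Hl : forall p, (N1 <= p)%nat -> /M < ell (u p)).
  { intros p Hp. specialize (HN1 p N1 Hp (le_n _)). unfold d2 in HN1.
    pose proof (d_nonneg X d Hm (u p) (u N1)). pose proof (ell_pos (u p)).
    assert (/ell (u p) < M).
    { unfold M. unfold Rabs in HN1; destruct (Rcase_abs _); lra. }
    rewrite <- (Rinv_inv (ell (u p))). apply Rinv_lt_contravar; auto.
    apply Rmult_lt_0_compat; auto. apply Rinv_0_lt_compat; auto. }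
  destruct (Hcd (/M/2)) as [N2 HN2]. { apply Rdiv_lt_0_compat; [apply Rinv_0_lt_compat|]; lra. }
  set (N3 := max N1 N2).
  destruct (cauchy_compact X d Hm u (cball (u N3) (/M/2)) N3 Hcd) as [l Hlim].
  - apply ell_compact. specialize (Hl N3 (Nat.le_max_l _ _)). pose proof (Rinv_0_lt_compat _ HM). lra.
  - intros p Hp. unfold cball. rewrite (d_sym X d Hm). left. apply HN2; lia.
  - exists l. intros e He. destruct (inv_ell_cont l (e/2)) as [dl [Hdl Hdl']]; [lra|].
    destruct (Hlim (Rmin dl (e/2))) as [N HN]; [apply Rmin_pos; lra|].
    exists N. intros p Hp. specialize (HN p Hp). unfold d2.
    pose proof (Rmin_l dl (e/2)). pose proof (Rmin_r dl (e/2)).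
    rewrite (d_sym X d Hm) in HN. pose proof (Hdl' (u p) ltac:(lra)).
    rewrite Rabs_minus_sym in H1. rewrite (d_sym X d Hm). lra.
Qed.

Lemma complete_metrizable : exists d' : X -> X -> R, is_metric d' /\ same_topology d d' /\ complete d'.
Proof. exists d2. split; [apply d2_metric|split; [apply d2_same|apply d2_complete]]. Qed.
End Pol.


Lemma small_ex x : 0 < x -> exists N, forall n, (N <= n)%nat -> 2 / (INR n + 1) < x.
Proof.
  intros Hx. destruct (INR_archimed x 2 Hx) as [N HN]. exists N. intros n Hn.
  apply le_INR in Hn. pose proof (pos_INR n).
  apply Rmult_lt_reg_r with (r := INR n + 1); [lra|].
  unfold Rdiv. rewrite Rmult_assoc, Rinv_l by lra. nra.
Qed.

Lemma small_ex' x : exists N, 0 < x -> forall n, (N <= n)%nat -> 2 / (INR n + 1) < x.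
Proof.
  destruct (Rlt_dec 0 x) as [h|h].
  - destruct (small_ex x h) as [N HN]. eauto.
  - exists O. intros; lra.
Qed.

Definition nx (x : R) : nat := proj1_sig (constructive_indefinite_description _ (small_ex' x)).
Lemma nx_spec x : 0 < x -> forall n, (nx x <= n)%nat -> 2 / (INR n + 1) < x.
Proof. unfold nx. destruct (constructive_indefinite_description _ _); auto. Qed.

Fixpoint sig_seq (s : nat -> R) (k : nat) : nat :=
  match k with O => O | S k' => max (S k') (nx (s (sig_seq s k'))) end.

Lemma subseq_dec (s : nat -> R) : (forall k, 0 < s k) -> (forall k, s k <= 2 / (INR k + 1)) ->
  Un_decreasing (fun k => s (sig_seq s k)) /\ Un_cv (fun k => s (sig_seq s k)) 0.
Proof.
  intros Hp Hb.
  assert (Hge : forall k, (k <= sig_seq s k)%nat).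
  { destruct k; [lia|]. change (sig_seq s (S k)) with (max (S k) (nx (s (sig_seq s k)))). lia. }
  split.
  - intro k. cbv beta. change (sig_seq s (S k)) with (max (S k) (nx (s (sig_seq s k)))). pose proof (nx_spec (s (sig_seq s k)) (Hp _) (max (S k) (nx (s (sig_seq s k)))) (Nat.le_max_r _ _)).
    pose proof (Hb (max (S k) (nx (s (sig_seq s k))))). lra.
  - intros e He. destruct (small_ex e He) as [N HN]. exists N. intros n Hn.
    unfold R_dist. rewrite Rminus_0_r, Rabs_pos_eq by (left; apply Hp).
    pose proof (Hb (sig_seq s n)). pose proof (HN (sig_seq s n) ltac:(specialize (Hge n); lia)). lra.
Qed.


Section GM.
Variable X : Type.
Variable d : X -> X -> R.
Hypothesis Hm : is_metric d.
Variable m : nat.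
Variables (V : X -> Prop) (W : Eucl m -> Prop) (phi : X -> Eucl m) (psi : Eucl m -> X).
Hypotheses (HV : is_open d V) (HW : open_E m W) (Hphi : forall y, V y -> W (phi y))
  (Hpsi : forall w, W w -> V (psi w)) (Hpp : forall y, V y -> psi (phi y) = y)
  (Hqq : forall w, W w -> phi (psi w) = w) (Hcphi : cont_to_E d m V phi) (Hcpsi : cont_from_E d m W psi).
Variables (c : Eucl m) (A0 a : R).
Hypotheses (Ha : 0 < a) (HaA : a < A0) (HboxW : forall w, inbox m c A0 w -> W w).

Definition Yc := fun y => exists w, inbox m c A0 w /\ y = psi w.

Definition gmap (T : Eucl m -> Eucl m) (y : X) : X :=
  if excluded_middle_informative (V y) then psi (T (phi y)) else y.

Definition good (T : Eucl m -> Eucl m) :=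
  (forall v, T v <> v -> inobox m c a v) /\ (forall v, inbox m c a v -> inbox m c a (T v)) /\
  exists L, 0 < L /\ forall v w dl, 0 <= dl -> (forall j, Rabs (v j - w j) <= dl) ->
     forall i, Rabs (T v i - T w i) <= L * dl.

Lemma Y_V y : Yc y -> V y /\ inbox m c A0 (phi y).
Proof. intros [w [Hw ->]]. split; [apply Hpsi; auto|]. rewrite Hqq; auto. Qed.

Lemma Y_of y : V y -> inbox m c A0 (phi y) -> Yc y.
Proof. intros. exists (phi y). split; auto. rewrite Hpp; auto. Qed.

Lemma inobox_inbox b v : inobox m c b v -> inbox m c b v.
Proof. intros H i. left. apply H. Qed.

Lemma good_A0 T : good T -> forall v, inbox m c A0 v -> inbox m c A0 (T v).
Proof.
  intros [Hs [Hb _]] v Hv. destruct (classic (T v = v)) as [e|e]; [rewrite e; auto|].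
  pose proof (Hb v (inobox_inbox _ _ (Hs v e))) as H. intro i. specialize (H i). lra.
Qed.

Lemma gmap_Y T y : Yc y -> gmap T y = psi (T (phi y)).
Proof. intros HY. unfold gmap. destruct (excluded_middle_informative (V y)); auto. exfalso. apply n, Y_V; auto. Qed.

Lemma gmap_fix T y : good T -> ~ inobox m c a (phi y) -> gmap T y = y.
Proof.
  intros [Hs _] H. unfold gmap. destruct (excluded_middle_informative (V y)); auto.
  destruct (classic (T (phi y) = phi y)) as [e|e].
  - rewrite e. apply Hpp; auto.
  - exfalso. apply H, Hs; auto.
Qed.

Lemma interior_Y y : V y -> inobox m c a (phi y) -> exists r, 0 < r /\ forall z, d y z < r -> Yc z.
Proof.
  intros Vy Hy. destruct (HV y Vy) as [e1 [He1 He1']].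
  destruct (Hcphi y Vy (A0 - a) ltac:(lra)) as [dl [Hdl Hdl']].
  exists (Rmin e1 dl). split; [apply Rmin_pos; auto|]. intros z Hz.
  pose proof (Rmin_l e1 dl). pose proof (Rmin_r e1 dl).
  assert (Vz : V z) by (apply He1'; lra).
  apply Y_of; auto. intro i. specialize (Hdl' z Vz ltac:(lra) i). specialize (Hy i).
  unfold Rabs in *; repeat destruct (Rcase_abs _); lra.
Qed.

Lemma gmap_maps T y : good T -> Yc y -> Yc (gmap T y).
Proof.
  intros HT HY. rewrite gmap_Y; auto. destruct (Y_V y HY) as [Vy Hy].
  exists (T (phi y)). split; auto. apply good_A0; auto.
Qed.

Lemma gmap_cont T : good T -> cont_on d Yc (gmap T).
Proof.
  intros HT y HY e He. pose proof HT as [_ [_ [L [HL HLip]]]].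
  destruct (Y_V y HY) as [Vy Hy].
  assert (WT : W (T (phi y))) by (apply HboxW, good_A0; auto).
  destruct (Hcpsi (T (phi y)) WT e He) as [d1 [Hd1 Hd1']].
  destruct (Hcphi y Vy (d1 / (2 * L))) as [d2 [Hd2 Hd2']].
  { apply Rdiv_lt_0_compat; lra. }
  exists d2. split; auto. intros z HZ Hz. rewrite !gmap_Y; auto.
  destruct (Y_V z HZ) as [Vz Hz'].
  apply Hd1'. { apply HboxW, good_A0; auto. }
  intro i. rewrite Rabs_minus_sym. eapply Rle_lt_trans.
  - apply (HLip (phi y) (phi z) (d1 / (2 * L))).
    + left. apply Rdiv_lt_0_compat; lra.
    + intro j. rewrite Rabs_minus_sym. left. apply Hd2'; auto.
  - replace (L * (d1 / (2 * L))) with (d1 / 2) by (field; lra). lra.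
Qed.

Lemma gmap_bd T y : good T -> rel_boundary d Yc y -> gmap T y = y.
Proof.
  intros HT [HY Hcl]. destruct (classic (inobox m c a (phi y))) as [h|h].
  - exfalso. destruct (Y_V y HY) as [Vy _]. destruct (interior_Y y Vy h) as [r [Hr Hr']].
    destruct (Hcl r Hr) as [z [Hz Hdz]]. apply Hz, Hr'; auto.
  - apply gmap_fix; auto.
Qed.

Lemma gmap_out T y : good T -> ~ Yc y -> gmap T y = y.
Proof.
  intros HT HY. unfold gmap. destruct (excluded_middle_informative (V y)) as [Vy|]; auto.
  destruct (classic (inobox m c a (phi y))) as [h|h].
  - exfalso. apply HY, Y_of; auto. apply inobox_inbox in h. intro i. specialize (h i). lra.
  - pose proof (gmap_fix T y HT h) as E. unfold gmap in E.
    destruct (excluded_middle_informative (V y)); [auto|contradiction].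
Qed.

Lemma gmap_homeo T T' : good T -> good T' -> (forall v, T' (T v) = v) -> (forall v, T (T' v) = v) ->
  homeo_bd d Yc (gmap T).
Proof.
  intros HT HT' H1 H2. split; [|split; [|split]].
  - intros y Hy. apply gmap_out; auto.
  - intros y Hy. apply gmap_maps; auto.
  - exists (gmap T'). split; [intros; apply gmap_maps; auto|]. split; [|split; [|split]].
    + intros y Hy. destruct (Y_V y Hy) as [Vy Hy'].
      rewrite (gmap_Y T y Hy). rewrite gmap_Y.
      * rewrite Hqq; [rewrite H1; apply Hpp; auto|]. apply HboxW, good_A0; auto.
      * rewrite <- gmap_Y with (T := T); auto. apply gmap_maps; auto.
    + intros y Hy. destruct (Y_V y Hy) as [Vy Hy'].
      rewrite (gmap_Y T' y Hy). rewrite gmap_Y.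
      * rewrite Hqq; [rewrite H2; apply Hpp; auto|]. apply HboxW, good_A0; auto.
      * rewrite <- gmap_Y with (T := T'); auto. apply gmap_maps; auto.
    + apply gmap_cont; auto.
    + apply gmap_cont; auto.
  - intros y Hy. apply gmap_bd; auto.
Qed.

Lemma gmap_radius T (p : X) (eta : R) : good T -> V p -> phi p = c -> T c <> c ->
  (forall w, inbox m c a w -> d p (psi w) < eta) ->
  exists r, radius d (gmap T) r /\ 0 < r /\ r <= 2 * eta.
Proof.
  intros HT Vp Hpc HTc Heta.
  assert (Hcb : inbox m c a c). { intro i. rewrite Rminus_diag, Rabs_R0. lra. }
  assert (Hbd : forall y, d y (gmap T y) <= 2 * eta).
  { intro y. destruct (classic (inobox m c a (phi y))) as [h|h].
    - unfold gmap. destruct (excluded_middle_informative (V y)) as [Vy|Vy].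
      + pose proof (d_tri X d Hm y p (psi (T (phi y)))).
        pose proof (Heta _ (inobox_inbox _ _ h)). rewrite Hpp in H0 by auto.
        pose proof (Heta (T (phi y))). destruct HT as [_ [Hb _]].
        specialize (H1 (Hb _ (inobox_inbox _ _ h))). rewrite (d_sym X d Hm y p) in H. lra.
      + rewrite (d_refl X d Hm). pose proof (Heta c Hcb). pose proof (d_nonneg X d Hm p (psi c)). lra.
    - rewrite gmap_fix; auto. rewrite (d_refl X d Hm). pose proof (Heta c Hcb).
      pose proof (d_nonneg X d Hm p (psi c)). lra. }
  assert (Hpos : 0 < d p (gmap T p)).
  { unfold gmap. destruct (excluded_middle_informative (V p)) as [_|]; [|contradiction].
    rewrite Hpc. destruct (d_nonneg X d Hm p (psi (T c))) as [h|h]; auto.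
    exfalso. symmetry in h. apply (d_eq X d Hm) in h. apply HTc.
    assert (W (T c)). { apply HboxW. destruct HT as [_ [Hb _]]. pose proof (Hb c Hcb) as HH.
      intro i. specialize (HH i). lra. }
    rewrite <- (Hqq (T c)) by auto. rewrite <- h. auto. }
  destruct (completeness (fun t => exists x, t = d x (gmap T x))) as [r Hr].
  - exists (2 * eta). intros t [x ->]. apply Hbd.
  - exists (d p (gmap T p)), p; reflexivity.
  - exists r. split; auto. split.
    + assert (d p (gmap T p) <= r) by (apply (proj1 Hr); exists p; reflexivity). lra.
    + apply (proj2 Hr). intros t [x ->]. apply Hbd.
Qed.
End GM.


Lemma compact_ext X (d : X -> X -> R) S S' : (forall y, S y <-> S' y) -> is_compact d S -> is_compact d S'.
Proof.
  intros H HS I U HU Hc. destruct (HS I U HU) as [l Hl].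
  - intros y Hy. apply Hc, H; auto.
  - exists l. intros y Hy. apply Hl, H; auto.
Qed.

Lemma good_hF m i0 c a : 0 < a -> good m c a (hF m i0 c a).
Proof.
  intros Ha. split; [apply hF_supp|split; [intros; apply hF_box; auto; lra|]].
  exists (2 * (INR m + 1)). split; [pose proof (pos_INR m); lra|]. intros. apply hF_lip; auto.
Qed.
Lemma good_hG m i0 c a : 0 < a -> good m c a (hG m i0 c a).
Proof.
  intros Ha. split; [apply hG_supp|split; [intros; apply hG_box; auto; lra|]].
  exists (3 * (INR m + 1)). split; [pose proof (pos_INR m); lra|]. intros. apply hG_lip; auto.
Qed.

Lemma local_flex X (d : X -> X -> R) (Hm : is_metric d) (A : X -> Prop) p eps :
  manifold_pos d A -> A p -> 0 < eps ->
  exists Y : X -> Prop, (forall y, Y y -> A y) /\ is_compact d Y /\ (forall y, Y y -> d p y < eps) /\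
  exists (g : nat -> X -> X) (r : nat -> R), (forall k, homeo_bd d Y (g k)) /\
    (forall k, radius d (g k) (r k)) /\ Un_decreasing r /\ Un_cv r 0 /\ (forall k, r k <> 0).
Proof.
  intros [m [Hm1 Hle]] Ap Heps.
  destruct (Hle p Ap) as [V [W [phi [psi [HV [Vp [VA [HW [Hphi [Hpsi [Hpp [Hqq [Hcphi Hcpsi]]]]]]]]]]]]].
  destruct m as [|m']; [lia|]. set (i0 := @Fin.F1 m'). set (m := S m') in *.
  set (c := phi p).
  assert (Wc : W c) by (apply Hphi; auto).
  assert (Hpc : psi c = p) by (apply Hpp; auto).
  destruct (HW c Wc) as [eW [HeW HeW']].
  destruct (Hcpsi c Wc eps Heps) as [dl [Hdl Hdl']].
  set (A0 := Rmin eW dl / 2).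
  assert (HA0 : 0 < A0) by (unfold A0; pose proof (Rmin_pos eW dl HeW Hdl); lra).
  assert (HboxW : forall w, inbox m c A0 w -> W w).
  { intros w Hw. apply HeW'. intro i. specialize (Hw i). pose proof (Rmin_l eW dl). unfold A0 in Hw. lra. }
  assert (Hboxe : forall w, inbox m c A0 w -> d p (psi w) < eps).
  { intros w Hw. rewrite <- Hpc. apply Hdl'; auto. intro i. specialize (Hw i). pose proof (Rmin_r eW dl).
    unfold A0 in Hw. pose proof (Rmin_pos eW dl HeW Hdl). lra. }
  assert (Hak : forall k : nat, exists a, 0 < a < A0 /\ forall w, inbox m c a w -> d p (psi w) < 1 / (INR k + 1)).
  { intro k. assert (Hk : 0 < 1 / (INR k + 1)) by (pose proof (pos_INR k); apply Rdiv_lt_0_compat; lra).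
    destruct (Hcpsi c Wc _ Hk) as [dk [Hdk Hdk']].
    exists (Rmin (A0/2) (dk/2)). split.
    - split; [apply Rmin_pos; lra|]. pose proof (Rmin_l (A0/2) (dk/2)). lra.
    - intros w Hw. rewrite <- Hpc. apply Hdk'.
      + apply HboxW. intro i. specialize (Hw i). pose proof (Rmin_l (A0/2) (dk/2)). lra.
      + intro i. specialize (Hw i). pose proof (Rmin_r (A0/2) (dk/2)). lra. }
  set (a := fun k => proj1_sig (constructive_indefinite_description _ (Hak k))).
  assert (Ha : forall k, 0 < a k < A0 /\ forall w, inbox m c (a k) w -> d p (psi w) < 1 / (INR k + 1)).
  { intro k. unfold a. destruct (constructive_indefinite_description _ _); auto. }
  set (g := fun k => gmap X m V phi psi (hF m i0 c (a k))).
  assert (Hs : forall k, exists s, radius d (g k) s /\ 0 < s /\ s <= 2 / (INR k + 1)).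
  { intro k. destruct (Ha k) as [[Ha1 Ha2] Ha3].
    destruct (gmap_radius X d Hm m V W phi psi Hpp Hqq c A0 (a k) Ha1 Ha2 HboxW (hF m i0 c (a k)) p
      (1 / (INR k + 1)) (good_hF m i0 c (a k) Ha1) Vp eq_refl (hF_center m i0 c (a k) Ha1) Ha3) as [s [S1 [S2 S3]]].
    exists s. split; auto. split; auto. unfold Rdiv in *. lra. }
  set (s := fun k => proj1_sig (constructive_indefinite_description _ (Hs k))).
  assert (Hs' : forall k, radius d (g k) (s k) /\ 0 < s k /\ s k <= 2 / (INR k + 1)).
  { intro k. unfold s. destruct (constructive_indefinite_description _ _); auto. }
  exists (Yc X m psi c A0). split; [|split; [|split]].
  - intros y [w [Hw ->]]. apply VA, Hpsi, HboxW; auto.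
  - eapply compact_ext; [|apply (chart_compact X d m W psi (fun i => c i - A0) (fun i => c i + A0) HW Hcpsi)].
    + intro y. split; intros [w [Hw ->]]; exists w; split; auto; intro i; specialize (Hw i);
      unfold Rabs in *; destruct (Rcase_abs _); lra.
    + intros w Hw. apply HboxW. intro i; specialize (Hw i); unfold Rabs in *; destruct (Rcase_abs _); lra.
  - intros y [w [Hw ->]]. apply Hboxe; auto.
  - destruct (subseq_dec s (fun k => proj1 (proj2 (Hs' k))) (fun k => proj2 (proj2 (Hs' k)))) as [D1 D2].
    exists (fun k => g (sig_seq s k)), (fun k => s (sig_seq s k)). split; [|split; [|split; [|split]]]; auto.
    + intro k. destruct (Ha (sig_seq s k)) as [[Ha1 Ha2] _].
      apply (gmap_homeo X d m V W phi psi HV Hpsi Hpp Hqq Hcphi Hcpsi c A0 (a (sig_seq s k)) Ha1 Ha2 HboxW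
        _ (hG m i0 c (a (sig_seq s k)))); [apply good_hF|apply good_hG|intro; apply hGF|intro; apply hFG]; auto.
    + intro k. apply Hs'.
    + intro k. pose proof (proj1 (proj2 (Hs' (sig_seq s k)))). lra.
Qed.


Section P1.
Variable X : Type.
Variable d : X -> X -> R.
Hypothesis Hm : is_metric d.
Variable x : nat -> X.
Hypothesis Hx : closed_discrete_seq d x.

Lemma noncompact : ~ is_compact d (fun _ => True).
Proof.
  destruct Hx as [Hinj [Hcl Hiso]]. intro HK.
  set (I := option {n : nat & {e : R | 0 < e /\ forall k, d (x n) (x k) < e -> k = n}}).
  set (U := fun (i : I) y => match i with None => ~ (exists n, x n = y)
            | Some t => d (x (projT1 t)) y < proj1_sig (projT2 t) end).
  destruct (HK I U) as [l Hl].
  - intros [t|]; simpl; [apply open_ball; auto|exact Hcl].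
  - intros y _. destruct (classic (exists n, x n = y)) as [[n <-]|h].
    + destruct (Hiso n) as [e [He He']]. exists (Some (existT _ n (exist _ e (conj He He')))).
      simpl. rewrite (d_refl X d Hm). auto.
    + exists None. simpl. auto.
  - destruct (eventually_list I (fun i n => ~ U i (x n)) l) as [N HN].
    + intros [[n0 [e [He He']]]|] _.
      * exists (S n0). intros n Hn Hu. simpl in Hu. specialize (He' n Hu). lia.
      * exists O. intros n _ Hu. simpl in Hu. apply Hu. eauto.
    + destruct (Hl (x N) Logic.I) as [i [Hin Hi]]. apply (HN i Hin N (le_n _)); auto.
Qed.

Lemma locfin (Y : nat -> X -> Prop) : (forall n y, Y n y -> d (x n) y < 1 / (INR n + 1)) ->
  forall K, is_compact d K -> exists N, forall n, (N <= n)%nat -> forall y, K y -> ~ Y n y.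
Proof.
  intros HY K HK. destruct Hx as [Hinj [Hcl Hiso]].
  set (I := {z : X & {pr : R * nat | 0 < fst pr /\ forall k, d z (x k) < 2 * fst pr -> k = snd pr}}).
  set (U := fun (i : I) y => d (projT1 i) y < fst (proj1_sig (projT2 i))).
  destruct (HK I U) as [l Hl].
  - intro i. apply open_ball; auto.
  - intros z _. destruct (classic (exists j, x j = z)) as [[j <-]|h].
    + destruct (Hiso j) as [e [He He']].
      assert (P : 0 < fst (e/2, j) /\ forall k, d (x j) (x k) < 2 * fst (e/2, j) -> k = snd (e/2, j)).
      { simpl. split; [lra|]. intros k Hk. apply He'. lra. }
      exists (existT _ (x j) (exist _ (e/2, j) P)). unfold U; simpl. rewrite (d_refl X d Hm). lra.
    + destruct (Hcl z h) as [e [He He']].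
      assert (P : 0 < fst (e/2, O) /\ forall k, d z (x k) < 2 * fst (e/2, O) -> k = snd (e/2, O)).
      { simpl. split; [lra|]. intros k Hk. exfalso. apply (He' (x k)); [lra|eauto]. }
      exists (existT _ z (exist _ (e/2, O) P)). unfold U; simpl. rewrite (d_refl X d Hm). lra.
  - destruct (eventually_list I (fun i n => n <> snd (proj1_sig (projT2 i)) /\
        1 / (INR n + 1) < fst (proj1_sig (projT2 i))) l) as [N HN].
    + intros [z [[e j] [He He']]] _. simpl in *.
      destruct (small_ex e He) as [N1 HN1]. exists (max N1 (S j)). intros n Hn. split; [lia|].
      pose proof (HN1 n ltac:(lia)). pose proof (pos_INR n).
      assert (1 / (INR n + 1) <= 2 / (INR n + 1)) by (unfold Rdiv; apply Rmult_le_compat_r; [left; apply Rinv_0_lt_compat|]; lra).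
      lra.
    + exists N. intros n Hn y Ky Yy. destruct (Hl y Ky) as [i [Hin Hi]].
      destruct (HN i Hin n Hn) as [H1 H2]. unfold U in Hi.
      destruct i as [z [[e j] [He He']]]. simpl in *.
      apply H1, He'. pose proof (HY n y Yy). pose proof (d_tri X d Hm z y (x n)).
      rewrite (d_sym X d Hm y (x n)) in H0. lra.
Qed.
End P1.

Theorem part1 (X : Type) (d : X -> X -> R) :
     is_metric d -> locally_compact d -> polish d ->
     forall (x : nat -> X) (U : nat -> X -> Prop),
       closed_discrete_seq d x ->
       (forall n, is_open d (U n) /\ U n (x n) /\ manifold_pos d (U n)) ->
       (forall n k, n <> k -> forall y, U n y -> ~ U k y) ->
       flexible d.
Proof.
  intros Hm Hlc Hpol x U Hx HU Hdis.
  split; [auto|split; [apply (noncompact X d Hm x Hx)|split; [auto|]]].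
  assert (Hn : forall n, exists t : (X -> Prop) * (nat -> X -> X) * (nat -> R),
    let '(Y, g, r) := t in
    (forall y, Y y -> U n y) /\ is_compact d Y /\ (forall y, Y y -> d (x n) y < 1 / (INR n + 1)) /\
    (forall k, homeo_bd d Y (g k)) /\
    (forall k, radius d (g k) (r k)) /\ Un_decreasing r /\ Un_cv r 0 /\ (forall k, r k <> 0)).
  { intro n. destruct (HU n) as [_ [Hxn Hman]].
    destruct (local_flex X d Hm (U n) (x n) (1 / (INR n + 1)) Hman Hxn) as
      [Y [H1 [H2 [H3 [g [r H4]]]]]].
    { pose proof (pos_INR n). apply Rdiv_lt_0_compat; lra. }
    exists (Y, g, r). auto. }
  set (T := fun n => proj1_sig (constructive_indefinite_description _ (Hn n))).
  assert (HT : forall n, let '(Y, g, r) := T n in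
    (forall y, Y y -> U n y) /\ is_compact d Y /\ (forall y, Y y -> d (x n) y < 1 / (INR n + 1)) /\
    (forall k, homeo_bd d Y (g k)) /\
    (forall k, radius d (g k) (r k)) /\ Un_decreasing r /\ Un_cv r 0 /\ (forall k, r k <> 0)).
  { intro n. unfold T. destruct (constructive_indefinite_description _ _); auto. }
  exists (fun n => fst (fst (T n))), (fun n => snd (fst (T n))), (fun n => snd (T n)).
  split; [|split; [|split; [|split; [|split; [|split]]]]].
  - intros n k Hnk y H1 H2. specialize (HT n) as HTn; specialize (HT k) as HTk.
    destruct (T n) as [[Yn gn] rn]; destruct (T k) as [[Yk gk] rk]. simpl in *.
    apply (Hdis n k Hnk y); [apply HTn|apply HTk]; auto.
  - intro n. specialize (HT n). destruct (T n) as [[Y g] r]. simpl. apply HT.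
  - apply (locfin X d Hm x Hx). intros n y. specialize (HT n). destruct (T n) as [[Y g] r]. simpl. apply HT.
  - intros n k. specialize (HT n). destruct (T n) as [[Y g] r]. simpl. apply HT.
  - intros n k. specialize (HT n). destruct (T n) as [[Y g] r]. simpl. apply HT.
  - intros n. specialize (HT n). destruct (T n) as [[Y g] r]. simpl. split; apply HT.
  - intros n. specialize (HT n). destruct (T n) as [[Y g] r]. simpl. apply HT.
Qed.


Section P2.
Variable X : Type.
Variable d : X -> X -> R.
Hypothesis Hm : is_metric d.

Lemma manifold_lc A : manifold_pos d A -> (forall y, A y) -> locally_compact d.
Proof.
  intros [m [Hm1 Hle]] HA x.
  destruct (Hle x (HA x)) as [V [W [phi [psi [HV [Vp [VA [HW [Hphi [Hpsi [Hpp [Hqq [Hcphi Hcpsi]]]]]]]]]]]]].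
  set (c := phi x). destruct (HW c (Hphi x Vp)) as [eW [HeW HeW']].
  set (A0 := eW / 2).
  assert (HboxW : forall w, inbox m c A0 w -> W w).
  { intros w Hw. apply HeW'. intro i. specialize (Hw i). unfold A0 in Hw. lra. }
  set (K := Yc X m psi c A0).
  exists (fun y => exists r, 0 < r /\ forall z, d y z < r -> K z), K. split; [|split; [|split]].
  - intros y [r [Hr Hr']]. exists (r/2). split; [lra|]. intros z Hz. exists (r/2). split; [lra|].
    intros w Hw. apply Hr'. pose proof (d_tri X d Hm y z w). lra.
  - apply (interior_Y X d m V phi psi HV Hpp Hcphi c A0 (A0/2)); auto; try (unfold A0; lra).
    intro i. unfold c. rewrite Rminus_diag, Rabs_R0. unfold A0; lra.
  - eapply compact_ext; [|apply (chart_compact X d m W psi (fun i => c i - A0) (fun i => c i + A0) HW Hcpsi)].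
    + intro y. split; intros [w [Hw ->]]; exists w; split; auto; intro i; specialize (Hw i);
      unfold Rabs in *; destruct (Rcase_abs _); lra.
    + intros w Hw. apply HboxW. intro i; specialize (Hw i); unfold Rabs in *; destruct (Rcase_abs _); lra.
  - intros y [r [Hr Hr']]. apply Hr'. rewrite (d_refl X d Hm). auto.
Qed.

Lemma manifold_restrict A O : manifold_pos d A -> is_open d O -> (forall y, O y -> A y) -> manifold_pos d O.
Proof.
  intros [m [Hm1 Hle]] HO HOA. exists m. split; auto. intros y Oy.
  destruct (Hle y (HOA y Oy)) as [V [W [phi [psi [HV [Vp [VA [HW [Hphi [Hpsi [Hpp [Hqq [Hcphi Hcpsi]]]]]]]]]]]]].
  exists (fun z => V z /\ O z), (fun w => W w /\ O (psi w)), phi, psi.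
  split; [|split; [|split; [|split; [|split; [|split; [|split; [|split; [|split]]]]]]]].
  - intros z [Vz Oz]. destruct (HV z Vz) as [e1 [He1 He1']]. destruct (HO z Oz) as [e2 [He2 He2']].
    exists (Rmin e1 e2). split; [apply Rmin_pos; auto|]. intros w Hw.
    pose proof (Rmin_l e1 e2); pose proof (Rmin_r e1 e2). split; [apply He1'|apply He2']; lra.
  - auto.
  - intros z [_ Oz]; auto.
  - intros w [Ww Ow]. destruct (HO _ Ow) as [e [He He']]. destruct (Hcpsi w Ww e He) as [dl [Hdl Hdl']].
    destruct (HW w Ww) as [e2 [He2 He2']].
    exists (Rmin dl e2). split; [apply Rmin_pos; auto|]. intros w' Hw'.
    pose proof (Rmin_l dl e2); pose proof (Rmin_r dl e2).
    assert (W w') by (apply He2'; intro i; specialize (Hw' i); lra).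
    split; auto. apply He'. apply Hdl'; auto. intro i; specialize (Hw' i); lra.
  - intros z [Vz Oz]. split; auto. rewrite Hpp; auto.
  - intros w [Ww Ow]. split; auto.
  - intros z [Vz _]. auto.
  - intros w [Ww _]. auto.
  - intros z [Vz _] e He. destruct (Hcphi z Vz e He) as [dl [Hdl Hdl']]. exists dl. split; auto.
    intros z' [Vz' _]. auto.
  - intros w [Ww _] e He. destruct (Hcpsi w Ww e He) as [dl [Hdl Hdl']]. exists dl. split; auto.
    intros w' [Ww' _]. auto.
Qed.

Lemma separable_of (x0 : X) : second_countable d -> separable d.
Proof.
  intros [B [HBo HB]].
  set (pt := fun n => match excluded_middle_informative (exists y, B n y) with
     | left H => proj1_sig (constructive_indefinite_description _ H) | right _ => x0 end).
  assert (Hpt : forall n, (exists y, B n y) -> B n (pt n)).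
  { intros n H. unfold pt. destruct (excluded_middle_informative _); [|contradiction].
    destruct (constructive_indefinite_description _ _); auto. }
  set (D := fun y => exists n, y = pt n).
  set (g := fun y => match excluded_middle_informative (D y) with
     | left H => proj1_sig (constructive_indefinite_description _ H) | right _ => O end).
  assert (Hg : forall y, D y -> y = pt (g y)).
  { intros y Hy. unfold g. destruct (excluded_middle_informative _); [|contradiction].
    destruct (constructive_indefinite_description _ _); auto. }
  exists D, g. split.
  - intros y z Hy Hz E. rewrite (Hg y Hy), (Hg z Hz), E. auto.
  - intros y e He. destruct (HB (fun z => d y z < e) (open_ball X d Hm y e) y) as [n [Bn Hn]].
    { rewrite (d_refl X d Hm). auto. }
    exists (pt n). split; [exists n; auto|]. apply Hn, Hpt. eauto.
Qed.

Lemma finmin (J : nat) (f : nat -> R) : (forall k, (k < J)%nat -> 0 < f k) ->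
  exists e, 0 < e /\ forall k, (k < J)%nat -> e <= f k.
Proof.
  induction J; intros H.
  - exists 1. split; [lra|]. intros; lia.
  - destruct IHJ as [e [He He']]. { intros; apply H; lia. }
    exists (Rmin e (f J)). split; [apply Rmin_pos; auto|].
    intros k Hk. destruct (Nat.eq_dec k J) as [->|h]; [apply Rmin_r|].
    pose proof (He' k ltac:(lia)). pose proof (Rmin_l e (f J)). lra.
Qed.
End P2.


Lemma noncompact_cover X (d : X -> X -> R) : ~ is_compact d (fun _ => True) ->
  exists (I : Type) (U : I -> X -> Prop), (forall i, is_open d (U i)) /\ (forall y, exists i, U i y) /\
   ~ exists l : list I, forall y, exists i, In i l /\ U i y.
Proof.
  intro Hnc. apply NNPP; intro H. apply Hnc. intros I U HU Hc. apply NNPP; intro Hl. apply H.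
  exists I, U. split; [auto|split; [intro y; apply Hc; auto|]]. intros [l Hl']. apply Hl. exists l. intros y _. auto.
Qed.

Section Seq.
Variable X : Type.
Variable d : X -> X -> R.
Hypothesis Hm : is_metric d.
Variable I : Type.
Variable U : I -> X -> Prop.
Hypotheses (HUo : forall i, is_open d (U i)) (HUc : forall y, exists i, U i y)
  (HUnf : ~ exists l : list I, forall y, exists i, In i l /\ U i y).
Variable B : nat -> X -> Prop.
Hypotheses (HBo : forall n, is_open d (B n))
  (HB : forall O, is_open d O -> forall x, O x -> exists n, B n x /\ forall y, B n y -> O y).

Definition sel n : option I :=
  match excluded_middle_informative (exists i, forall y, B n y -> U i y) with
  | left H => Some (proj1_sig (constructive_indefinite_description _ H)) | right _ => None end.
Definition Vn n y := match sel n with Some i => U i y | None => False end.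

Lemma Vn_open n : is_open d (Vn n).
Proof. unfold Vn. destruct (sel n); [apply HUo|intros y []]. Qed.

Lemma Vn_cover y : exists n, Vn n y.
Proof.
  destruct (HUc y) as [i Hi]. destruct (HB (U i) (HUo i) y Hi) as [n [Bn Hn]].
  exists n. unfold Vn, sel. destruct (excluded_middle_informative _) as [h|h].
  - destruct (constructive_indefinite_description _ _) as [i' Hi']. simpl. auto.
  - apply h. eauto.
Qed.

Lemma Vn_nf N : exists y, forall n, (n <= N)%nat -> ~ Vn n y.
Proof.
  apply NNPP; intro H. apply HUnf.
  exists (flat_map (fun n => match sel n with Some i => i :: nil | None => nil end) (seq 0 (S N))).
  intro y. assert (exists n, (n <= N)%nat /\ Vn n y) as [n [Hn Hv]].
  { apply NNPP; intro H2; apply H; exists y; intros n Hn Hv; apply H2; eauto. }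
  unfold Vn in Hv. destruct (sel n) as [i|] eqn:E; [|contradiction].
  exists i; split; auto. apply in_flat_map. exists n. split; [apply in_seq; lia|]. rewrite E. left; auto.
Qed.

Definition idx y := proj1_sig (constructive_indefinite_description _ (Vn_cover y)).
Lemma idx_spec y : Vn (idx y) y.
Proof. unfold idx. destruct (constructive_indefinite_description _ _); auto. Qed.
Definition ptN N := proj1_sig (constructive_indefinite_description _ (Vn_nf N)).
Lemma ptN_spec N : forall n, (n <= N)%nat -> ~ Vn n (ptN N).
Proof. unfold ptN. destruct (constructive_indefinite_description _ _); auto. Qed.

Fixpoint NN k := match k with O => O | S k' => S (max (NN k') (idx (ptN (NN k')))) end.
Definition xs k := ptN (NN k).

Lemma NN_ge k : (k <= NN k)%nat.
Proof. induction k; simpl; lia. Qed.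
Lemma NN_mono j k : (j < k)%nat -> (idx (xs j) < NN k)%nat.
Proof.
  intros H. induction H.
  - simpl. unfold xs. lia.
  - simpl. lia.
Qed.

Lemma xs_distinct j k : (j < k)%nat -> xs j <> xs k.
Proof.
  intros H E. apply (ptN_spec (NN k) (idx (xs j))); [pose proof (NN_mono j k H); lia|].
  fold (xs k). rewrite <- E. apply idx_spec.
Qed.

Lemma xs_far z k : (idx z <= k)%nat -> ~ Vn (idx z) (xs k).
Proof. intros H. apply ptN_spec. pose proof (NN_ge k). lia. Qed.

Lemma xs_cds : closed_discrete_seq d xs.
Proof.
  split; [|split].
  - intros n k E. destruct (Nat.lt_trichotomy n k) as [h|[h|h]]; auto.
    + exfalso; apply (xs_distinct n k h E).
    + exfalso; apply (xs_distinct k n h); auto.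
  - intros z Hz. destruct (Vn_open (idx z) z (idx_spec z)) as [e0 [He0 He0']].
    destruct (finmin (idx z) (fun k => d z (xs k))) as [e [He He']].
    { intros k Hk. destruct (d_nonneg X d Hm z (xs k)) as [h|h]; auto.
      exfalso. apply Hz. exists k. symmetry. apply (d_eq X d Hm). auto. }
    exists (Rmin e0 e). split; [apply Rmin_pos; auto|]. intros y Hy [k <-].
    pose proof (Rmin_l e0 e); pose proof (Rmin_r e0 e).
    destruct (Nat.lt_ge_cases k (idx z)) as [h|h].
    + specialize (He' k h). simpl in He'. lra.
    + apply (xs_far z k h). apply He0'. lra.
  - intro n. set (z := xs n). destruct (Vn_open (idx z) z (idx_spec z)) as [e0 [He0 He0']].
    destruct (finmin (idx z) (fun k => if Nat.eq_dec k n then 1 else d z (xs k))) as [e [He He']].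
    { intros k Hk. destruct (Nat.eq_dec k n); [lra|].
      destruct (d_nonneg X d Hm z (xs k)) as [h|h]; auto.
      exfalso. symmetry in h. apply (d_eq X d Hm) in h. unfold z in h.
      destruct (Nat.lt_trichotomy n k) as [h'|[h'|h']]; [apply (xs_distinct n k h'); auto|lia|apply (xs_distinct k n h'); auto]. }
    exists (Rmin e0 e). split; [apply Rmin_pos; auto|]. intros k Hk.
    pose proof (Rmin_l e0 e); pose proof (Rmin_r e0 e).
    destruct (Nat.lt_ge_cases k (idx z)) as [h|h].
    + specialize (He' k h). destruct (Nat.eq_dec k n); auto. fold z in Hk. lra.
    + exfalso. apply (xs_far z k h). apply He0'. fold z in Hk. lra.
Qed.
End Seq.

Theorem part2 (X : Type) (d : X -> X -> R) :
     is_metric d -> second_countable d -> ~ is_compact d (fun _ => True) ->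
     manifold_pos d (fun _ => True) -> flexible d.
Proof.
  intros Hm Hsc Hnc Hman.
  destruct (noncompact_cover X d Hnc) as [I [U [HUo [HUc HUnf]]]].
  pose proof Hsc as [B [HBo HB]].
  assert (exists x, closed_discrete_seq d x) as [x Hx] by (eexists; apply (xs_cds X d Hm I U HUo HUc HUnf B HB)).
  assert (Hlc : locally_compact d) by (apply (manifold_lc X d Hm (fun _ => True)); auto).
  assert (Hpol : polish d).
  { split; [apply (separable_of X d Hm (x O) Hsc)|apply complete_metrizable; auto]. }
  pose proof Hx as [_ [_ Hiso]].
  set (e := fun n => proj1_sig (constructive_indefinite_description _ (Hiso n))).
  assert (He : forall n, 0 < e n /\ forall k, d (x n) (x k) < e n -> k = n).
  { intro n. unfold e. destruct (constructive_indefinite_description _ _); auto. }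
  apply (part1 X d Hm Hlc Hpol x (fun n y => d (x n) y < e n / 2) Hx).
  - intro n. split; [apply open_ball; auto|split].
    + rewrite (d_refl X d Hm). pose proof (proj1 (He n)). lra.
    + apply (manifold_restrict X d (fun _ => True)); auto. apply open_ball; auto.
  - intros n k Hnk y H1 H2. destruct (He n) as [Hn Hn']. destruct (He k) as [Hk Hk'].
    pose proof (d_tri X d Hm (x n) y (x k)). rewrite (d_sym X d Hm y (x k)) in H.
    destruct (Rle_dec (e k) (e n)).
    + apply Hnk. symmetry. apply Hn'. lra.
    + apply Hnk. apply Hk'. rewrite (d_sym X d Hm). lra.
Qed.

Theorem mainTheorem8 :
  (forall (X : Type) (d : X -> X -> R),
     is_metric d -> locally_compact d -> polish d ->
     forall (x : nat -> X) (U : nat -> X -> Prop),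
       closed_discrete_seq d x ->
       (forall n, is_open d (U n) /\ U n (x n) /\ manifold_pos d (U n)) ->
       (forall n k, n <> k -> forall y, U n y -> ~ U k y) ->
       flexible d)
  /\
  (forall (X : Type) (d : X -> X -> R),
     is_metric d -> second_countable d -> ~ is_compact d (fun _ => True) ->
     manifold_pos d (fun _ => True) ->
     flexible d).
Proof.
  split; [exact part1|exact part2].
Qed.
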